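(* Let an FCA with state set $S$, neighborhood $m=l+1+r$, local rule $f$ and boundary type $b\in\{\text{null},\text{periodic}\}$ be given, and let $G$ be its reversibility graph. Suppose $N$ is a negative vertex of $G$ with value $k\ge1$ and two circuits of lengths $r_1,r_2$ pass through $N$, with $\gcd(r_1,r_2)=1$. Then the FCA is not $n$-cell-reversible for every integer $n>k+r_1r_2-r_1-r_2$.
   Context: A one-dimensional finite cellular automaton (FCA) is given by a state set $S=\{0,1,\dots,s-1\}$, integers $l,r\ge 0$ with neighborhood size $m=l+1+r\ge 2$, a local rule $f:S^m\to S$, and a boundary type $b\in\{\text{null},\text{periodic}\}$. For $n\ge 1$ the global map $\tau_n:S^n\to S^n$ sends $(x_0,\dots,x_{n-1})$ to $(y_0,\dots,y_{n-1})$ with $y_i=f(x_{i-l},\dots,x_{i+r})$, where for the null boundary $x_j=0$ whenever $j<0$ or $j>n-1$, and for the periodic boundary indices are taken modulo $n$. The FCA is $n$-cell-reversible if $\tau_n$ is a bijection (equivalently, since $S^n$ is finite, surjective). Reversibility graph (RG). Null boundary: vertices are subsets of $S^{m-1}$; the root is $N_0=\{(a_1,\dots,a_{m-1})\in S^{m-1}: a_1=\dots=a_l=0\}$; the acceptance set is $R=\{(a_1,\dots,a_{m-1})\in S^{m-1}: a_{m-r}=\dots=a_{m-1}=0\}$ (so $R=S^{m-1}$ if $r=0$); for a subset $N$ and $c\in S$, $\delta(N,c)=\{(a_1,\dots,a_{m-1})\in S^{m-1}:\exists a_0\in S,\ (a_0,\dots,a_{m-2})\in N,\ f(a_0,a_1,\dots,a_{m-1})=c\}$.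 Periodic boundary: vertices are subsets of $S^{m-1}\times S^{m-1}$; the root and the acceptance set are $N_0=R=\{(a,a):a\in S^{m-1}\}$; $\delta(N,c)=\{((a_1,\dots,a_{m-1}),(b_1,\dots,b_{m-1})):\exists b_0\in S,\ ((a_1,\dots,a_{m-1}),(b_0,\dots,b_{m-2}))\in N,\ f(b_0,\dots,b_{m-1})=c\}$. In both cases the RG is the directed graph whose vertex set consists of all subsets obtainable from $N_0$ by repeatedly applying $\delta$ (including $N_0$; equal subsets are the same vertex; the empty set may occur), with, for each vertex $N$ and each $c\in S$, an edge labelled $c$ from $N$ to $\delta(N,c)$. The value of a vertex $N$ is the length of a shortest directed path from $N_0$ to $N$. A vertex $N$ is negative if $N\cap R=\emptyset$. A circuit is an elementary directed cycle of the RG (a closed directed path with no repeated vertex other than its start = end; a loop is a circuit of length $1$); its length is its number of edges, and it passes through $N$ if $N$ is one of its vertices. *)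

(* Defs.v *)
From mathcomp Require Import all_boot.
Set Implicit Arguments.
Unset Strict Implicit.
Unset Printing Implicit Defensive.

Inductive boundary := NullB | PeriodicB.

Section FCA.
(* state set S = {0,...,s-1} = 'I_s (s >= 1 so that the state 0 exists) *)
Variables (s : nat) (hs : 0 < s) (l r : nat).
Local Notation S := 'I_s.
Definition zeroS : S := Ordinal hs.

(* local rule f : S^m -> S with m = l + 1 + r = (l + r).+1 *)
Variable f : (l + r).+1.-tuple S -> S.

Definition cfg (n : nat) := {ffun 'I_n -> S}.

(* x_j for a nat index j, 0 if j is out of range [0, n-1] *)
Definition x_at (n : nat) (x : cfg n) (j : nat) : S :=
  if (insub j : option 'I_n) is Some i then x i else zeroS.

(* neighborhood (x_{i-l}, ..., x_{i+r}); entry k is x_{i-l+k} *)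
Definition nbhd (b : boundary) (n : nat) (x : cfg n) (i : 'I_n)
  : (l + r).+1.-tuple S :=
  match b with
  | NullB =>
      [tuple (if i + k < l then zeroS else x_at x (i + k - l)) | k < (l + r).+1]
  | PeriodicB =>
      (* (i - l + k) mod n, computed as (i + k + (n-1) l) mod n (n >= 1) *)
      [tuple x_at x ((i + k + (n - 1) * l) %% n) | k < (l + r).+1]
  end.

Definition tau (b : boundary) (n : nat) (x : cfg n) : cfg n :=
  [ffun i => f (nbhd b x i)].

Definition reversible (b : boundary) (n : nat) : Prop := bijective (@tau b n).

(* elements of S^(m-1) are (l + r).-tuples; tuple index k is a_(k+1) *)
Definition shift (a0 : S) (a : (l + r).-tuple S) : (l + r).-tuple S :=
  [tuple nth a0 (a0 :: a) k | k < l + r].   (* (a0, a_1, ..., a_(m-2)) *)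

Definition root_null : {set (l + r).-tuple S} :=
  [set a | [forall k : 'I_(l + r), (k < l) ==> (tnth a k == zeroS)]].
Definition acc_null : {set (l + r).-tuple S} :=
  [set a | [forall k : 'I_(l + r), (l <= k) ==> (tnth a k == zeroS)]].
Definition step_null (N : {set (l + r).-tuple S}) (c : S)
  : {set (l + r).-tuple S} :=
  [set a | [exists a0 : S, (shift a0 a \in N) && (f (cons_tuple a0 a) == c)]].

Definition root_per : {set (l + r).-tuple S * (l + r).-tuple S} :=
  [set p | p.1 == p.2].
Definition step_per (N : {set (l + r).-tuple S * (l + r).-tuple S}) (c : S)
  : {set (l + r).-tuple S * (l + r).-tuple S} :=
  [set p | [exists b0 : S,
      ((p.1, shift b0 p.2) \in N) && (f (cons_tuple b0 p.2) == c)]].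

End FCA.

Record RGdata (S : Type) := {
  rg_base : finType;
  rg_root : {set rg_base};
  rg_acc : {set rg_base};
  rg_step : {set rg_base} -> S -> {set rg_base} }.

Definition RG (s : nat) (hs : 0 < s) (l r : nat)
  (f : (l + r).+1.-tuple 'I_s -> 'I_s) (b : boundary) : RGdata 'I_s :=
  match b with
  | NullB => @Build_RGdata 'I_s _ (root_null hs l r) (acc_null hs l r) (step_null f)
  | PeriodicB => @Build_RGdata 'I_s _ (@root_per s l r) (@root_per s l r) (step_per f)
  end.

Section Graph.
Variables (S : Type) (D : RGdata S).
Local Notation V := {set rg_base D}.

Definition run (w : seq S) : V := foldl (@rg_step S D) (@rg_root S D) w.

Definition is_vertex (N : V) : Prop := exists w : seq S, run w = N.

Definition edge (N N' : V) : Prop := exists c : S, @rg_step S D N c = N'.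

(* value of N: length of a shortest directed path from the root to N
   (directed paths from the root correspond to label words) *)
Definition value (N : V) (k : nat) : Prop :=
  (exists w : seq S, size w = k /\ run w = N) /\
  (forall w : seq S, run w = N -> k <= size w).

Definition negative (N : V) : Prop := N :&: @rg_acc S D = set0.

(* circuit: elementary directed cycle v_0 -> v_1 -> ... -> v_(L-1) -> v_0,
   L >= 1, given as the duplicate-free list of its vertices; its length
   (number of edges) is L = size p *)
Definition circuit (p : seq V) : Prop :=
  [/\ 0 < size p, uniq p, (forall N, N \in p -> is_vertex N) &
      forall i, i < size p ->
        edge (nth set0 p i) (nth set0 p ((i + 1) %% size p))].

End Graph.

(* Main.v *)
Require Import Defs.
From mathcomp Require Import all_boot zify.
Set Implicit Arguments. Unset Strict Implicit.

Lemma nth_mkt (T : Type) n (G : nat -> T) x0 j : j < n ->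
  nth x0 [tuple G k | k < n] j = G j.
Proof. by move=> hj; have := nth_mktuple (fun k : 'I_n => G k) x0 (Ordinal hj). Qed.

Section Inv.
Variables (s : nat) (hs : 0 < s) (l r : nat) (f : (l + r).+1.-tuple 'I_s -> 'I_s).

Lemma foldl_inv (T : Type) (step : T -> 'I_s -> T) (root : T) (P : nat -> T -> Prop)
  (y : nat -> 'I_s) :
  P 0 root -> (forall j N, P j N -> P j.+1 (step N (y j))) ->
  forall w, (forall i, i < size w -> nth (zeroS hs) w i = y i) ->
  P (size w) (foldl step root w).
Proof.
move=> H0 HS; elim/last_ind => [//|w c IH] hw.
rewrite foldl_rcons size_rcons.
have -> : c = y (size w) by rewrite -(hw (size w)) ?nth_rcons ?ltnn ?eqxx // size_rcons.
apply: HS; apply: IH => i hi; rewrite -hw; first by rewrite nth_rcons hi.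
by rewrite size_rcons ltnS ltnW.
Qed.

Variable P : nat -> 'I_s.
Definition win j : (l + r).-tuple 'I_s := [tuple P (j + k) | k < l + r].

Lemma shift_win j : shift (P j) (win j.+1) = win j.
Proof.
apply: eq_from_tnth => i; rewrite !tnth_mktuple.
case: i => [[|i] hi] /=; first by rewrite addn0.
by rewrite -addSnnS; apply: (nth_mkt (fun k => P (j.+1 + k))); apply: ltnW.
Qed.

Lemma cons_win j : cons_tuple (P j) (win j.+1) = [tuple P (j + k) | k < (l + r).+1].
Proof.
apply: eq_from_tnth => i; rewrite (tnth_nth (P 0)) tnth_mktuple.
case: i => [[|i] hi] /=; first by rewrite addn0.
by rewrite -addSnnS; apply: (nth_mkt (fun k => P (j.+1 + k))).
Qed.
End Inv.
Lemma sylv r1 r2 d : 0 < r1 -> 0 < r2 -> coprime r1 r2 -> r1 * r2 < d + r1 + r2 ->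
  exists a b, d = a * r1 + b * r2.
Proof.
move=> p1 p2 co hd.
set c := chinese r1 r2 0 d %% (r1 * r2).
have c1 : c %% r1 = 0.
  by rewrite /c modn_dvdm ?dvdn_mulr // chinese_modl // mod0n.
have c2 : c %% r2 = d %% r2.
  by rewrite /c modn_dvdm ?dvdn_mull // chinese_modr.
have clt : c < r1 * r2 by rewrite ltn_mod muln_gt0 p1.
have [a ha] : exists a, c = a * r1 by exists (c %/ r1); rewrite {1}(divn_eq c r1) c1 addn0.
have alt : a < r2 by rewrite -(ltn_pmul2r p1) -ha mulnC.
have eqd := divn_eq d r2; have eqc := divn_eq c r2.
rewrite c2 in eqc.
have : c < d + r2 by nia.
move=> hcd.
have hq : c %/ r2 <= d %/ r2.
  rewrite leqNgt; apply/negP => hq.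
  have : (d %/ r2).+1 * r2 <= c %/ r2 * r2 by rewrite leq_mul2r hq orbT.
  nia.
exists a, (d %/ r2 - c %/ r2).
rewrite -ha mulnBl; nia.
Qed.

Section Sound.
Variables (s : nat) (hs : 0 < s) (l r : nat) (f : (l + r).+1.-tuple 'I_s -> 'I_s).

Definition Xn n (x : cfg s n) (j : nat) : 'I_s :=
  if j < l then zeroS hs else x_at hs x (j - l).
Definition Pn n (x : cfg s n) (t : nat) : 'I_s := x_at hs x ((t + (n - 1) * l) %% n).

Lemma null_sound n (x : cfg s n) w : size w = n ->
  (forall i : 'I_n, tau hs f NullB x i = nth (zeroS hs) w i) ->
  win l r (Xn x) n \in run (RG hs f NullB) w /\ win l r (Xn x) n \in acc_null hs l r.
Proof.
move=> hw ht; split.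
  rewrite /run /=.
  suff : size w <= n -> win l r (Xn x) (size w) \in foldl (step_null f) (root_null hs l r) w.
    by rewrite hw; apply.
  apply: (@foldl_inv s hs _ (step_null f) (root_null hs l r)
     (fun j N => j <= n -> win l r (Xn x) j \in N) (fun j => nth (zeroS hs) w j)); last by [].
  - move=> _; rewrite inE; apply/forallP => k; apply/implyP => hk.
    by rewrite /win tnth_mktuple /Xn add0n hk.
  - move=> j N IH hj; rewrite inE; apply/existsP; exists (Xn x j).
    rewrite shift_win (IH (ltnW hj)) /= cons_win.
    rewrite -(ht (Ordinal hj)) ffunE.
    by apply/eqP; congr f; apply: eq_mktuple => k.
rewrite inE; apply/forallP => k; apply/implyP => hk.
rewrite /win tnth_mktuple /Xn ltnNge (leq_trans hk (leq_addl _ _)) /= /x_at insubN //.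
by rewrite -leqNgt; lia.
Qed.

Lemma per_sound n (x : cfg s n) w : size w = n ->
  (forall i : 'I_n, tau hs f PeriodicB x i = nth (zeroS hs) w i) ->
  (win l r (Pn x) 0, win l r (Pn x) n) \in run (RG hs f PeriodicB) w /\
  (win l r (Pn x) 0, win l r (Pn x) n) \in @root_per s l r.
Proof.
move=> hw ht.
have Hn : win l r (Pn x) n = win l r (Pn x) 0.
  by apply: eq_mktuple => k; rewrite /Pn -addnA modnDl.
split; last by rewrite inE Hn.
rewrite /run /=.
suff : size w <= n -> (win l r (Pn x) 0, win l r (Pn x) (size w)) \in foldl (step_per f) (@root_per s l r) w.
  by rewrite hw; apply.
apply: (@foldl_inv s hs _ (step_per f) (@root_per s l r)
   (fun j N => j <= n -> (win l r (Pn x) 0, win l r (Pn x) j) \in N) (fun j => nth (zeroS hs) w j)); last by [].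
- by move=> _; rewrite inE.
- move=> j N IH hj; rewrite inE; apply/existsP; exists (Pn x j) => /=.
  rewrite shift_win (IH (ltnW hj)) /= cons_win.
  rewrite -(ht (Ordinal hj)) ffunE.
  by apply/eqP; congr f; apply: eq_mktuple => k.
Qed.
End Sound.
Section GraphL.
Variables (S : Type) (D : RGdata S).
Local Notation V := {set rg_base D}.
Local Notation step := (@rg_step S D).

Lemma circ_path (c : seq V) i : circuit c -> i < size c -> forall t,
  exists u, size u = t /\ foldl step (nth set0 c i) u = nth set0 c ((i + t) %% size c).
Proof.
move=> [h0 _ _ he] hi; elim => [|t [u [hu hf]]].
  by exists [::]; rewrite addn0 modn_small.
have [a ha] := he _ (ltn_pmod (i + t) h0).
exists (rcons u a); rewrite size_rcons hu foldl_rcons hf ha; split=> //.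
by rewrite modnDml addn1 addnS.
Qed.

Lemma circ_loop (c : seq V) N : circuit c -> N \in c ->
  exists u, size u = size c /\ foldl step N u = N.
Proof.
move=> hc hN; have hi : index N c < size c by rewrite index_mem.
have [u [hu hf]] := circ_path hc hi (size c).
by exists u; split => //; move: hf; rewrite modnDr modn_small // nth_index.
Qed.

Lemma loop_iter N u : foldl step N u = N -> forall a,
  exists v, size v = a * size u /\ foldl step N v = N.
Proof.
move=> hu; elim => [|a [v [hv hf]]]; first by exists [::].
by exists (u ++ v); rewrite size_cat hv mulSn foldl_cat hu hf.
Qed.
End GraphL.

Theorem corollary2 (s : nat) (hs : 0 < s) (l r : nat) (hm : 2 <= (l + r).+1)
  (f : (l + r).+1.-tuple 'I_s -> 'I_s) (b : boundary)
  (N : {set rg_base (RG hs f b)}) (k r1 r2 : nat)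
  (c1 c2 : seq {set rg_base (RG hs f b)}) :
  is_vertex N -> negative N -> value N k -> 1 <= k ->
  circuit c1 -> N \in c1 -> size c1 = r1 ->
  circuit c2 -> N \in c2 -> size c2 = r2 ->
  coprime r1 r2 ->
  forall n : nat, k + r1 * r2 < n + r1 + r2 -> ~ reversible hs f b n.
Proof.
move=> _ hneg [[w [hw hr]] _] _ hc1 hN1 hs1 hc2 hN2 hs2 hco n hn.
have p1 : 0 < r1 by rewrite -hs1; case: hc1.
have p2 : 0 < r2 by rewrite -hs2; case: hc2.
have hrr : r1 + r2 <= r1 * r2 + 1 by nia.
have hkn : k <= n by lia.
have [a [bb hd]] : exists a bb, n - k = a * r1 + bb * r2.
  by apply: sylv => //; lia.
have [u1 [hu1 hf1]] := circ_loop hc1 hN1.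
have [u2 [hu2 hf2]] := circ_loop hc2 hN2.
have [v1 [hv1 hg1]] := loop_iter hf1 a.
have [v2 [hv2 hg2]] := loop_iter hf2 bb.
set W := w ++ v1 ++ v2.
have hW : size W = n by rewrite /W !size_cat hv1 hv2 hu1 hu2 hs1 hs2 hw; lia.
have hR : run (RG hs f b) W = N by rewrite /run /W !foldl_cat -/(run _ w) hr hg1 hg2.
move=> [g _ gK].
set y : cfg s n := [ffun i : 'I_n => nth (zeroS hs) W i].
have ht : forall i : 'I_n, tau hs f b (g y) i = nth (zeroS hs) W i by move=> i; rewrite gK ffunE.
move: hneg ht; rewrite /negative -hR.
move: (g y) => x.
clearbody W; clear -hW; case: b => /= hneg ht.
  have [h1 h2] := null_sound hW ht.
  have : win l r (Xn hs l x) n \in set0 by rewrite -hneg inE h1 h2.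
  by rewrite inE.
have [h1 h2] := per_sound hW ht.
have : (win l r (Pn hs l x) 0, win l r (Pn hs l x) n) \in set0 by rewrite -hneg inE h1 h2.
by rewrite inE.
Qed.
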